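(* Consider the SBCM with parameters $\gamma>0$ and $\delta\ge0$, and let $\mathbf{x}$ be a linearly stable steady state. Then for each persuadable node $i\in\mathcal{P}$ there exists a neighbor $j\sim i$ such that $$|x_i-x_j|\le\sqrt{\max\{\delta,\gamma^{-1}\}}.$$
   Context: Let $\mathcal{G}$ be a finite undirected unweighted graph without self-loops, with node set $\mathcal{N}$, adjacency written $i\sim j$, partitioned into zealots $\mathcal{Z}$ and persuadable nodes $\mathcal{P}=\mathcal{N}\setminus\mathcal{Z}$ (each persuadable node has at least one neighbor). The influence function is $w(x_i,x_j)=\frac{1}{1+e^{\gamma(x_i-x_j)^2-\gamma\delta}}$ if $i\sim j$ and $0$ otherwise. The SBCM is $\frac{dx_i}{dt}=f_i(\mathbf{x})=\frac{\sum_j w(x_i,x_j)(x_j-x_i)}{\sum_j w(x_i,x_j)}$ for $i\in\mathcal{P}$ and $\frac{dx_i}{dt}=0$ for $i\in\mathcal{Z}$. A steady state is $\mathbf{x}$ with all $f_i(\mathbf{x})=0$. It is linearly stable if all eigenvalues of $\mathbf{J}_{\mathcal{P}}=(\partial f_i/\partial x_j)_{i,j\in\mathcal{P}}$ at $\mathbf{x}$ are strictly negative. *)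

(* Defs.v *)
From HB Require Import structures.
From mathcomp Require Import all_boot all_order all_algebra.
From mathcomp Require Import all_classical all_reals all_analysis.
From mathcomp Require Import complex.

Set Implicit Arguments.
Unset Strict Implicit.
Unset Printing Implicit Defensive.

Import Order.TTheory GRing.Theory Num.Theory.
Local Open Scope ring_scope.

Section SBCM.
Variables (R : realType) (T : finType).

Definition sbcm_w (adj : rel T) (gamma delta : R) (x : T -> R) (i j : T) : R :=
  if adj i j then 1 / (1 + expR (gamma * (x i - x j) ^+ 2 - gamma * delta)) else 0.

(* The SBCM vector field f_i(x); zealots have f_i = 0. *)
Definition sbcm_f (adj : rel T) (Z : {set T}) (gamma delta : R) (x : T -> R) (i : T) : R :=
  if i \in Z then 0
  else (\sum_j sbcm_w adj gamma delta x i j * (x j - x i)) /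
       (\sum_j sbcm_w adj gamma delta x i j).

Definition steady_state adj Z gamma delta (x : T -> R) : Prop :=
  forall i, sbcm_f adj Z gamma delta x i = 0.

Definition upd (x : T -> R) (j : T) (t : R) : T -> R :=
  fun k => if k == j then t else x k.

Definition sbcm_partial adj Z gamma delta (x : T -> R) (i j : T) : R :=
  derive1 (fun t => sbcm_f adj Z gamma delta (upd x j t) i) (x j).

(* Jacobian restricted to the persuadable nodes P = ~: Z, indexed by 'I_#|P| *)
Definition jacP adj (Z : {set T}) gamma delta (x : T -> R) : 'M[R]_#|~: Z| :=
  \matrix_(a, b) sbcm_partial adj Z gamma delta x
                   (enum_val a) (enum_val b).

(* linearly stable: all (complex) eigenvalues of J_P are strictly negative reals *)
Definition linearly_stable adj Z gamma delta (x : T -> R) : Prop :=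
  steady_state adj Z gamma delta x /\
  forall z : R[i],
    eigenvalue (map_mx (real_complex R) (jacP adj Z gamma delta x)) z -> z < 0.

End SBCM.

(* Main.v *)
Require Import Defs.
From HB Require Import structures.
From mathcomp Require Import all_boot all_order all_algebra.
From mathcomp Require Import all_classical all_reals all_analysis.
From mathcomp Require Import complex.
From mathcomp Require Import ring lra.

Import Order.TTheory GRing.Theory Num.Theory.
Local Open Scope ring_scope.

Set Implicit Arguments.
Unset Strict Implicit.

Section LA.
Local Open Scope sesquilinear_scope.
Lemma key_la (R : realType) n (A M : 'M[R]_n) (d : 'I_n -> R) :
  (forall a, 0 < d a) -> (forall a b, M a b = M b a) ->
  (forall a b, A a b = M a b / d a) ->
  (forall z : R[i], eigenvalue (map_mx (real_complex R) A) z -> z < 0) ->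
  forall a, M a a < 0.
Proof.
move=> dpos Msym AE eigneg a.
pose rc := real_complex R.
pose s b := Num.sqrt (d b).
have spos b : 0 < s b by rewrite sqrtr_gt0.
have ss b : s b * s b = d b by rewrite -expr2 sqr_sqrtr // ltW.
pose Sc : 'M[R[i]]_n := \matrix_(b, c) rc (M b c / (s b * s c)).
have Sherm : Sc \is hermsymmx.
  apply: realsym_hermsym.
    rewrite is_hermitianmxE expr0 scale1r; apply/eqP.
    apply/matrixP => b c; rewrite !mxE Msym.
    by rewrite /idfun (mulrC (s c)).
  apply/mxOverP => b c; rewrite mxE.
  by rewrite realE -[0]/(rc 0) !lecR -realE num_real.
have /orthomx_spectralP Sdec := hermitian_normalmx Sherm.
set P := spectralmx Sc in Sdec; set lam := spectral_diag Sc in Sdec.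
have Pu : P \is unitarymx := spectral_unitarymx Sc.
have Punit : P \in unitmx := spectral_unit Sc.
pose Ds : 'M[R[i]]_n := diag_mx (\row_b rc (s b)).
pose Dsi : 'M[R[i]]_n := diag_mx (\row_b rc (s b)^-1).
have DsDsi : Ds *m Dsi = 1%:M.
  rewrite mulmx_diag; apply/matrixP => b c; rewrite !mxE.
  case: (b =P c) => [->|_]; last by rewrite !mulr0n.
  by rewrite !mulr1n -rmorphM /= divff ?gt_eqF.
have Ac_eq : map_mx rc A = Dsi *m Sc *m Ds.
  rewrite mul_diag_mx mul_mx_diag; apply/matrixP => b c; rewrite !mxE AE.
  rewrite -!rmorphM /=; congr rc.
  rewrite -ss invfM; field.
  by rewrite !gt_eqF.
pose Q := P *m Ds.
have QA : Q *m map_mx rc A = diag_mx lam *m Q.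
  rewrite Ac_eq /Q !mulmxA -[P *m Ds *m Dsi]mulmxA DsDsi mulmx1.
  by rewrite {1}Sdec !mulmxA mulmxV // mul1mx.
have Qunit : Q \in unitmx.
  rewrite unitmx_mul Punit /= unitmxE det_diag.
  rewrite unitfE; apply/prodf_neq0 => b _; rewrite mxE.
  by rewrite -[0]/(rc 0) (inj_eq (@complexI _)) gt_eqF.
have lamneg k : lam 0 k < 0.
  apply: eigneg; apply/eigenvalueP; exists (row k Q).
    by rewrite -row_mul QA row_mul row_diag_mx -scalemxAl -rowE.
  apply/eqP => rk0.
  have : row k (Q *m invmx Q) = row k (1%:M : 'M[R[i]]_n) by rewrite mulmxV.
  rewrite row_mul rk0 mul0mx => /matrixP /(_ 0 k); rewrite !mxE eqxx /=.
  by move/eqP; rewrite eq_sym oner_eq0.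
have PtP : P^t* *m P = 1%:M by rewrite -invmx_unitary // mulVmx.
have Saa : Sc a a = \sum_k lam 0 k * `|P k a| ^+ 2.
  rewrite {1}Sdec invmx_unitary // mul_mx_diag !mxE.
  apply: eq_bigr => k _; rewrite !mxE normCKC; ring.
have norm1 : \sum_k `|P k a| ^+ 2 = 1.
  have := congr1 (fun X : 'M[R[i]]_n => X a a) PtP; rewrite /= !mxE eqxx /= => H.
  transitivity (\sum_(j < n) (P ^t*) a j * P j a); last exact: H.
  by apply: eq_bigr => k _; rewrite !mxE normCKC.
have [k k0] : exists k, `|P k a| ^+ 2 != 0.
  apply/existsP; apply: contraT; rewrite negb_exists => /forallP H.
  move: norm1; rewrite big1 => [/eqP|k _]; first by rewrite eq_sym oner_eq0.
  by apply/eqP; rewrite -[_ == _]negbK H.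
have Sneg : Sc a a < 0.
  rewrite Saa (bigD1 k) //=.
  apply: ltr_wnDr.
    apply: sumr_le0 => j _.
    by rewrite nmulr_rle0 ?lamneg // exprn_ge0.
  by rewrite nmulr_rlt0 ?lamneg // lt_def k0 exprn_ge0.
move: Sneg; rewrite mxE -[0]/(rc 0) ltcR.
by rewrite pmulr_llt0 // invr_gt0 mulr_gt0.
Qed.
End LA.

Section D.
Variables (R : realType) (gamma delta : R).
Definition EE (u : R) := expR (gamma * u ^+ 2 - gamma * delta).
Definition WW (u : R) := 1 / (1 + EE u).
Definition WWd (u : R) := - (1 + EE u) ^-2 * (EE u * (gamma * (2 * u))).
Definition cc (u : R) := WW u + u * WWd u.

Lemma EE_derive u : is_derive u (1:R) EE (EE u * (gamma * (2 * u))).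
Proof.
have h1 : is_derive u (1:R) (fun s : R => gamma * s ^+ 2 - gamma * delta) (gamma * (2 * u)).
  by apply: is_derive_eq; rewrite subr0 /GRing.scale /=; ring.
have := @is_derive1_comp R expR _ u _ _ (is_derive_expR _) h1.
by [].
Qed.

Lemma WW_derive u : is_derive u (1:R) WW (WWd u).
Proof.
have h : is_derive u (1:R) (fun s => 1 + EE s) (EE u * (gamma * (2 * u))).
  by apply: is_derive_eq; rewrite add0r mul1r subr0 /GRing.scale /= /EE; ring.
have -> : WW = (fun s => (1 + EE s)^-1) by apply/funext => s; rewrite /WW div1r.
apply: is_derive_eq.
  apply: is_deriveV.
  by rewrite gt_eqF // ltr_wpDr // expR_ge0.
by rewrite /WWd /GRing.scale /=.
Qed.

Lemma hh_derive u : is_derive u (1:R) (fun s => WW s * s) (cc u).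
Proof.
have H := is_deriveM (WW_derive u) (@is_derive_id _ _ u 1).
apply: is_derive_eq.
by rewrite /cc /GRing.scale /=; ring.
Qed.

Lemma cc_even u : cc (- u) = cc u.
Proof. rewrite /cc /WWd /WW /EE sqrrN; ring. Qed.

Lemma cc_neg u : 0 < gamma -> delta < u ^+ 2 -> gamma^-1 < u ^+ 2 -> cc u < 0.
Proof.
move=> g0 hd hg.
have E1 : 1 < EE u.
  rewrite /EE -expR0 ltr_expR -mulrBr mulr_gt0 // subr_gt0 //.
have gu : 1 < gamma * u ^+ 2 by rewrite -(mulfV (lt0r_neq0 g0)) ltr_pM2l.
have Ep : 0 < 1 + EE u by lra.
have -> : cc u = (1 + EE u - 2 * (gamma * u ^+ 2) * EE u) / (1 + EE u) ^+ 2.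
  rewrite /cc /WW /WWd; field; lra.
rewrite pmulr_llt0 ?invr_gt0 ?exprn_gt0 //.
nra.
Qed.
End D.

Lemma is_derive_sumT (R : realType) (I : finType) (h : I -> R -> R) (x0 : R) (dh : I -> R) :
  (forall k, is_derive x0 (1:R) (h k) (dh k)) ->
  is_derive x0 (1:R) (fun t => \sum_k h k t) (\sum_k dh k).
Proof.
move=> H.
have -> : (fun t => \sum_k h k t) = \sum_k h k by rewrite fct_sumE.
elim/big_rec2: _ => [|k y1 y2 _ IH]; first exact: is_derive_cst.
exact: is_deriveD.
Qed.

Lemma is_derive_aff (R : realType) (u e x0 : R) :
  is_derive x0 (1:R) (fun t : R => u + e * (t - x0)) e.
Proof.
apply: is_derive_eq.
by rewrite /GRing.scale /= subr0 add0r !mul1r mulr1.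
Qed.

Section G.
Variables (R : realType) (T : finType) (adj : rel T) (Z : {set T}) (gamma delta : R) (x : T -> R).

Definition Dv i := \sum_k sbcm_w adj gamma delta x i k.
Definition Lm i j := \sum_k (if adj i k then
   - (cc gamma delta (x i - x k) * ((i == j)%:R - (k == j)%:R)) else 0).

Lemma upd_lin j t m : upd x j t m = x m + (m == j)%:R * (t - x j).
Proof.
rewrite /upd; case: (m =P j) => [->|_]; first by rewrite mul1r addrC subrK.
by rewrite mul0r addr0.
Qed.

Lemma partial_eq i j : i \notin Z -> steady_state adj Z gamma delta x -> 0 < Dv i ->
  sbcm_partial adj Z gamma delta x i j = Lm i j / Dv i.
Proof.
move=> hi hst hD.
rewrite /sbcm_partial derive1E.
pose e k := ((i == j)%:R - (k == j)%:R : R).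
pose dd k t := (x i - x k) + e k * (t - x j).
pose Nf t := \sum_k (if adj i k then - (WW gamma delta (dd k t) * dd k t) else 0).
pose Df t := \sum_k (if adj i k then WW gamma delta (dd k t) else 0).
have yE t k : upd x j t i - upd x j t k = dd k t.
  by rewrite !upd_lin /dd /e; ring.
have yE' t k : upd x j t k - upd x j t i = - dd k t by rewrite -yE opprB.
have fE : (fun t => sbcm_f adj Z gamma delta (upd x j t) i) = fun t => Nf t * (Df t)^-1.
  apply/funext => t; rewrite /sbcm_f (negbTE hi); congr (_ / _).
    apply: eq_bigr => k _; rewrite /sbcm_w; case: (adj i k); last by rewrite mul0r.
    by rewrite yE yE' mulrN.
  by apply: eq_bigr => k _; rewrite /sbcm_w; case: (adj i k) => //; rewrite yE.
have ddx k : dd k (x j) = x i - x k by rewrite /dd subrr mulr0 addr0.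
have dN : is_derive (x j) (1:R) Nf
    (\sum_k (if adj i k then - (cc gamma delta (x i - x k) * e k) else 0)).
  apply: is_derive_sumT => k; case: (adj i k).
    apply: is_deriveN.
    have := is_derive1_comp (hh_derive gamma delta (dd k (x j)))
      (is_derive_aff (x i - x k) (e k) (x j)).
    by rewrite ddx.
  exact: is_derive_cst.
have dD : is_derive (x j) (1:R) Df
    (\sum_k (if adj i k then WWd gamma delta (x i - x k) * e k else 0)).
  apply: is_derive_sumT => k; case: (adj i k).
    have := is_derive1_comp (WW_derive gamma delta (dd k (x j)))
      (is_derive_aff (x i - x k) (e k) (x j)).
    by rewrite ddx.
  exact: is_derive_cst.
have Dxj : Df (x j) = Dv i.
  by apply: eq_bigr => k _; rewrite /sbcm_w ddx.
have Nxj : Nf (x j) = 0.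
  have := hst i; rewrite /sbcm_f (negbTE hi) => /eqP.
  rewrite mulf_eq0 invr_eq0 (gt_eqF hD) orbF => /eqP <-.
  apply: eq_bigr => k _; rewrite /sbcm_w ddx; case: (adj i k); last by rewrite mul0r.
  by rewrite -mulrN opprB.
have Dne : Df (x j) != 0 by rewrite Dxj gt_eqF.
have H := is_deriveM dN (is_deriveV Dne dD).
rewrite fE.
have -> : (fun t => Nf t / Df t) = Nf * (fun t => (Df t)^-1) by [].
rewrite derive_val Nxj Dxj scale0r add0r /GRing.scale /= mulrC.
by [].
Qed.
End G.

Section Aux.
Variables (R : realType) (T : finType) (adj : rel T) (Z : {set T}) (gamma delta : R) (x : T -> R).
Hypothesis adj_sym : symmetric adj.
Hypothesis adj_irr : irreflexive adj.

Lemma Lm_off i j : i != j ->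
  Lm adj gamma delta x i j = if adj i j then cc gamma delta (x i - x j) else 0.
Proof.
move=> ij; rewrite /Lm (bigD1 j) //= big1.
  rewrite (negbTE ij) eqxx addr0; case: (adj i j) => //=.
  by rewrite sub0r mulrN1 opprK.
move=> k kj; case: (adj i k) => //.
by rewrite (negbTE ij) (negbTE kj) subrr mulr0 oppr0.
Qed.

Lemma Lm_diag i :
  Lm adj gamma delta x i i = - \sum_k (if adj i k then cc gamma delta (x i - x k) else 0).
Proof.
rewrite /Lm -sumrN; apply: eq_bigr => k _.
case: (eqVneq k i) => [->|ki]; first by rewrite adj_irr oppr0.
by case: (adj i k); rewrite ?oppr0 // eqxx /= ?subr0 ?addr0 mulr1.
Qed.

Lemma Lm_sym i j : Lm adj gamma delta x i j = Lm adj gamma delta x j i.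
Proof.
case: (eqVneq i j) => [->//|ij].
rewrite !Lm_off // 1?eq_sym // adj_sym.
by case: (adj j i) => //; rewrite -opprB cc_even.
Qed.

Lemma Dv_pos i : (exists j, adj i j) -> 0 < Dv adj gamma delta x i.
Proof.
move=> [j hj]; rewrite /Dv (bigD1 j) //=.
have W0 k : 0 <= sbcm_w adj gamma delta x i k.
  rewrite /sbcm_w; case: (adj i k) => //.
apply: ltr_wpDr; first by apply: sumr_ge0 => k _.
rewrite /sbcm_w hj divr_gt0 // ltr_wpDr // expR_ge0.
Qed.
End Aux.

Unset Implicit Arguments.

Theorem theorem2 (R : realType) (T : finType) (adj : rel T) (Z : {set T})
    (gamma delta : R) (x : T -> R)
    (adj_sym : symmetric adj) (adj_irr : irreflexive adj)
    (hP : forall i, i \notin Z -> exists j, adj i j)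
    (hgamma : 0 < gamma) (hdelta : 0 <= delta)
    (hstab : linearly_stable adj Z gamma delta x) :
  forall i, i \notin Z ->
    exists j, adj i j /\ `|x i - x j| <= Num.sqrt (Num.max delta gamma^-1).
Proof.
move=> i hi.
have hst := hstab.1.
have iin : i \in ~: Z by rewrite inE.
pose a := enum_rank_in iin i.
have ea : enum_val a = i := enum_rankK_in iin iin.
have nZ (b : 'I_#|~: Z|) : enum_val b \notin Z.
  by have := enum_valP b; rewrite inE.
have dpos (b : 'I_#|~: Z|) : 0 < Dv adj gamma delta x (enum_val b).
  by apply: Dv_pos; apply: hP.
have key := @key_la R _ (jacP adj Z gamma delta x)
  (\matrix_(b, c) Lm adj gamma delta x (enum_val b) (enum_val c))
  (fun b => Dv adj gamma delta x (enum_val b)) dpos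
  (fun b c => ltac:(by rewrite !mxE Lm_sym))
  (fun b c => ltac:(by rewrite !mxE partial_eq))
  hstab.2 a.
move: key; rewrite mxE ea Lm_diag // oppr_lt0 => hsum.
set m := Num.max delta gamma^-1.
have m0 : 0 <= m by rewrite le_max hdelta.
case: (pselect (exists j, adj i j /\ `|x i - x j| <= Num.sqrt m)) => // Hn.
exfalso; move: hsum; apply/negP; rewrite -leNgt; apply: sumr_le0 => k _.
case hk: (adj i k) => //.
have hlt : Num.sqrt m < `|x i - x k|.
  rewrite ltNge; apply/negP => h; apply: Hn; exists k; split => //.
have u0 : 0 < (x i - x k) ^+ 2.
  have nu : 0 < `|x i - x k| := le_lt_trans (sqrtr_ge0 _) hlt.
  by rewrite -real_normK ?num_real // exprn_gt0.
move: hlt; rewrite -sqrtr_sqr ltr_sqrt // => hlt.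
apply/ltW/cc_neg => //.
- by apply: le_lt_trans hlt; rewrite le_max lexx.
- by apply: le_lt_trans hlt; rewrite le_max lexx orbT.
Qed.
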